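(* Let $m,n\ge0$ be integers, let $\mathbb{K}$ be a field of characteristic zero, and regard $m-n$ as an element of $\mathbb{K}$. Let $\lambda,\mu$ be bipartitions. (i) If $\lambda$ is almost $(m|n)$-cross, then $D_{\lambda,\mu}(m-n)=0$ whenever $\mu\ne\lambda$. (ii) If $\mu$ is almost $(m|n)$-cross, then $D_{\lambda,\mu}(m-n)=0$ unless $\lambda=\mu$ or $|\lambda|>|\mu|+2$.
   Context: A partition is a weakly decreasing sequence $\alpha=(\alpha_1,\alpha_2,\dots)$ of nonnegative integers, almost all zero, with size $|\alpha|=\sum_i\alpha_i$. A bipartition is a pair $\lambda=(\lambda^\bullet,\lambda^\circ)$ of partitions, with size $|\lambda|=|\lambda^\bullet|+|\lambda^\circ|$. A bipartition $\lambda$ is $(m|n)$-cross if there exists $0\le k\le m$ with $\lambda^\bullet_{k+1}+\lambda^\circ_{m-k+1}\le n$. It is almost $(m|n)$-cross if it is not $(m|n)$-cross but every bipartition strictly contained in it (componentwise containment) is $(m|n)$-cross. Set $I_\wedge(\lambda)=\{\lambda^\bullet_i-(i-1):i\ge1\}$ and $I_\vee(\lambda,\delta)=\{i-\delta-\lambda^\circ_i:i\ge1\}$. The weight diagram $x_\lambda(\delta)$ labels each integer $j$ by: - $\bigcirc$ if $j$ is in neither set; - $\wedge$ if $j$ is only in $I_\wedge(\lambda)$; - $\vee$ if $j$ is only in $I_\vee(\lambda,\delta)$; - $\times$ if $j$ is in both. The cap diagram $c_\lambda(\delta)$ is built iteratively: at each step, draw a cap connecting $i<j$ whenever $i$ is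 labelled $\vee$, $j$ is labelled $\wedge$, and every integer strictly between them is labelled $\bigcirc$ or $\times$ or lies on an earlier cap. Vertices joined by a cap are connected. $x_\mu(\delta)$ is linked to $x_\lambda(\delta)$ if it is obtained by interchanging labels on finitely many pairs of connected vertices of $x_\lambda(\delta)$. $D_{\lambda,\mu}(\delta)=1$ if $x_\mu(\delta)$ is linked to $x_\lambda(\delta)$, and $0$ otherwise. *)

(* Defs.v *)
From Stdlib Require Import ClassicalDescription.
From mathcomp Require Import all_boot all_order all_algebra.
Set Implicit Arguments. Unset Strict Implicit. Unset Printing Implicit Defensive.
Import GRing.Theory Num.Theory.

(* A partition is stored as its (canonical) list of nonzero parts, weakly
   decreasing; all further parts are zero. *)
Definition is_partition (s : seq nat) : bool :=
  sorted geq s && all (fun x => 0 < x) s.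

Record partition := Partition { pseq : seq nat; pseqP : is_partition pseq }.

(* the i-th part alpha_i (1-indexed, i >= 1); equals 0 beyond the length *)
Definition part (a : partition) (i : nat) : nat := nth 0 (pseq a) i.-1.

Definition psize (a : partition) : nat := sumn (pseq a).

Record bipartition := Bipartition { bul : partition; cir : partition }.

Definition bsize (l : bipartition) : nat := psize (bul l) + psize (cir l).

Definition bicontained (nu l : bipartition) : Prop :=
  forall i, 1 <= i ->
    part (bul nu) i <= part (bul l) i /\ part (cir nu) i <= part (cir l) i.

Definition strictly_contained (nu l : bipartition) : Prop :=
  bicontained nu l /\ nu <> l.

Definition cross (m n : nat) (l : bipartition) : Prop :=
  exists k, k <= m /\ part (bul l) k.+1 + part (cir l) (m - k).+1 <= n.

Definition almost_cross (m n : nat) (l : bipartition) : Prop :=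
  ~ cross m n l /\ forall nu, strictly_contained nu l -> cross m n nu.

Definition in_wedge (l : bipartition) (j : int) : Prop :=
  exists i, 1 <= i /\ j = ((part (bul l) i)%:Z - (i - 1)%:Z)%R.

Definition in_vee (K : fieldType) (d : K) (l : bipartition) (j : int) : Prop :=
  exists i, 1 <= i /\ (j%:~R = i%:R - d - (part (cir l) i)%:R :> K)%R.

Inductive label := Circ | Wedge | Vee | Cross.

Definition decP (P : Prop) : bool :=
  if excluded_middle_informative P then true else false.

Definition weight (K : fieldType) (d : K) (l : bipartition) (j : int) : label :=
  match decP (in_wedge l j), decP (in_vee d l j) with
  | false, false => Circ
  | true, false => Wedge
  | false, true => Vee
  | true, true => Cross
  end.

Definition on_cap (C : int -> int -> Prop) (v : int) : Prop :=
  exists a b, C a b /\ (v = a \/ v = b).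

(* caps drawn at a step, given the set C of caps drawn at earlier steps *)
Definition new_cap (x : int -> label) (C : int -> int -> Prop) (i j : int) : Prop :=
  (i < j)%R /\ x i = Vee /\ x j = Wedge /\ ~ on_cap C i /\ ~ on_cap C j /\
  forall v, (i < v)%R -> (v < j)%R -> x v = Circ \/ x v = Cross \/ on_cap C v.

Fixpoint caps_upto (x : int -> label) (k : nat) : int -> int -> Prop :=
  match k with
  | 0 => fun _ _ => False
  | k'.+1 => fun i j => caps_upto x k' i j \/ new_cap x (caps_upto x k') i j
  end.

Definition cap (x : int -> label) (i j : int) : Prop := exists k, caps_upto x k i j.

Definition swap_pairs (s : seq (int * int)) (v : int) : int :=
  foldr (fun p w => if w == p.1 then p.2 else if w == p.2 then p.1 else w) v s.

(* y is obtained from x by interchanging labels on finitely many pairs of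
   connected vertices of x *)
Definition linked (x y : int -> label) : Prop :=
  exists s : seq (int * int),
    (forall p, p \in s -> cap x p.1 p.2) /\ forall j, y j = x (swap_pairs s j).

Definition D (K : fieldType) (d : K) (l mu : bipartition) : nat :=
  if excluded_middle_informative (linked (weight d l) (weight d mu)) then 1 else 0.

(* Main.v *)
Require Import Defs.
From Stdlib Require Import Classical ClassicalDescription.
From mathcomp Require Import all_boot all_order all_algebra.
From mathcomp Require Import zify.
Set Implicit Arguments. Unset Strict Implicit. Unset Printing Implicit Defensive.
Import Order.TTheory GRing.Theory Num.Theory.

Lemma decPE (P : Prop) : Defs.decP P = true <-> P.
Proof. rewrite /Defs.decP; destruct (excluded_middle_informative P); split => //. Qed.

Lemma decPF (P : Prop) : Defs.decP P = false <-> ~ P.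
Proof. rewrite /Defs.decP; destruct (excluded_middle_informative P); split => //. Qed.

Lemma geq_tr : transitive geq.
Proof. move=> x y z /= H1 H2; lia. Qed.

Lemma part_mono (a : Defs.partition) i j : (1 <= i)%N -> (i <= j)%N -> (part a j <= part a i)%N.
Proof.
move=> Hi Hij; have /andP [Hs Hp] := pseqP a; rewrite /part; move: Hs Hp; set s := pseq a => Hs Hp.
have Hij' : (i.-1 <= j.-1)%N by lia.
case: (ltnP j.-1 (size s)) => Hj; last by rewrite nth_default.
have H := @sorted_leq_nth _ geq geq_tr (@leqnn) 0 s Hs i.-1 j.-1.
rewrite !inE in H; apply: H; clearbody s; lia.
Qed.

Lemma part_zero (a : Defs.partition) j : (size (pseq a) < j)%N -> part a j = 0%N.
Proof. move=> H; rewrite /part nth_default //; lia. Qed.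

Lemma part_pos (a : Defs.partition) j : (1 <= j)%N -> (j <= size (pseq a))%N -> (0 < part a j)%N.
Proof.
move=> H1 H2; have /andP [Hs Hp] := pseqP a; rewrite /part; move: H2 Hs Hp; set s := pseq a => H2 Hs Hp.
move/allP: Hp => Hp; apply: Hp; by apply: mem_nth; rewrite prednK.
Qed.

Lemma part_inj (a b : Defs.partition) : (forall k, (1 <= k)%N -> part a k = part b k) -> a = b.
Proof.
move=> H.
have Hsz : size (pseq a) = size (pseq b).
  apply/eqP; rewrite eqn_leq; apply/andP; split; rewrite leqNgt; apply/negP => Hlt.
  - have := H (size (pseq b)).+1 isT; rewrite (part_zero (a:=b)) //.
    have := part_pos (a:=a) (j:=(size (pseq b)).+1) isT Hlt; lia.
  - have := H (size (pseq a)).+1 isT; rewrite (part_zero (a:=a)) //.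
    have := part_pos (a:=b) (j:=(size (pseq a)).+1) isT Hlt; lia.
have E : pseq a = pseq b.
  apply: (eq_from_nth (x0:=0%N)) => // i _; have := H i.+1 isT; by rewrite /part.
case: a b H Hsz E => sa Ha [sb Hb] /= _ _ E; subst sb.
by rewrite (bool_irrelevance Ha Hb).
Qed.

Lemma intr_eq0K (K : fieldType) (charK0 : [pchar K]%R =i pred0) (z : int) :
  (z%:~R = 0 :> K)%R -> z = 0%R.
Proof.
have H0 := (pcharf0P K).1 charK0.
case: z => k /=.
  move=> /eqP Hk; congr Posz; apply/eqP; by rewrite -H0.
rewrite NegzE mulrNz => /eqP; rewrite oppr_eq0 => Hk.
by have := H0 k.+1; rewrite Hk.
Qed.

Lemma intr_injK (K : fieldType) (charK0 : [pchar K]%R =i pred0) (z w : int) :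
  (z%:~R = w%:~R :> K)%R -> z = w.
Proof.
move=> H; apply/eqP; rewrite -subr_eq0; apply/eqP; apply: (intr_eq0K charK0).
by rewrite intrB H subrr.
Qed.

Definition Vl (m n : nat) (l : bipartition) (j : int) : Prop :=
  exists i, (1 <= i)%N /\ j = (i%:Z - (m%:Z - n%:Z) - (part (cir l) i)%:Z)%R.

Lemma vee_iff (K : fieldType) (charK0 : [pchar K]%R =i pred0) m n l j :
  in_vee (((m%:Z - n%:Z)%R)%:~R%R : K) l j <-> Vl m n l j.
Proof.
split => -[i [Hi E]]; exists i; split => //.
  apply: (intr_injK charK0); rewrite E !intrB //.
rewrite E !intrB //.
Qed.

Ltac wsolve l j d :=
  rewrite /weight;
  have h1 := decPE (in_wedge l j); have h2 := decPF (in_wedge l j);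
  have h3 := decPE (in_vee d l j); have h4 := decPF (in_vee d l j);
  destruct (Defs.decP (in_wedge l j)); destruct (Defs.decP (in_vee d l j));
  intuition (try discriminate).

Lemma weight_wedge (K : fieldType) (d : K) l j :
  in_wedge l j <-> (weight d l j = Wedge \/ weight d l j = Cross).
Proof. wsolve l j d. Qed.

Lemma weight_vee (K : fieldType) (d : K) l j :
  in_vee d l j <-> (weight d l j = Vee \/ weight d l j = Cross).
Proof. wsolve l j d. Qed.

Lemma weight_Vee (K : fieldType) (d : K) l j :
  weight d l j = Vee <-> (in_vee d l j /\ ~ in_wedge l j).
Proof. wsolve l j d. Qed.

Lemma weight_Wedge (K : fieldType) (d : K) l j :
  weight d l j = Wedge <-> (in_wedge l j /\ ~ in_vee d l j).
Proof. wsolve l j d. Qed.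

Definition Aw (a : Defs.partition) (i : nat) : int := ((part a i)%:Z - (i - 1)%:Z)%R.
Definition Bv (m n : nat) (a : Defs.partition) (i : nat) : int :=
  (i%:Z - (m%:Z - n%:Z) - (part a i)%:Z)%R.

Lemma Aw_lt a i j : (1 <= i)%N -> (i < j)%N -> (Aw a j < Aw a i)%R.
Proof. move=> Hi Hij; have := part_mono a Hi (ltnW Hij); rewrite /Aw; lia. Qed.
Lemma Aw_le a i j : (1 <= i)%N -> (i <= j)%N -> (Aw a j <= Aw a i)%R.
Proof. move=> Hi Hij; have := part_mono a Hi Hij; rewrite /Aw; lia. Qed.
Lemma Bv_lt m n a i j : (1 <= i)%N -> (i < j)%N -> (Bv m n a i < Bv m n a j)%R.
Proof. move=> Hi Hij; have := part_mono a Hi (ltnW Hij); rewrite /Bv; lia. Qed.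
Lemma Bv_le m n a i j : (1 <= i)%N -> (i <= j)%N -> (Bv m n a i <= Bv m n a j)%R.
Proof. move=> Hi Hij; have := part_mono a Hi Hij; rewrite /Bv; lia. Qed.
Lemma Aw_inj a i j : (1 <= i)%N -> (1 <= j)%N -> Aw a i = Aw a j -> i = j.
Proof.
move=> Hi Hj E; case: (ltngtP i j) => // H.
- by have := Aw_lt a Hi H; rewrite E ltxx.
- by have := Aw_lt a Hj H; rewrite E ltxx.
Qed.
Lemma Bv_inj m n a i j : (1 <= i)%N -> (1 <= j)%N -> Bv m n a i = Bv m n a j -> i = j.
Proof.
move=> Hi Hj E; case: (ltngtP i j) => // H.
- by have := Bv_lt m n a Hi H; rewrite E ltxx.
- by have := Bv_lt m n a Hj H; rewrite E ltxx.
Qed.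

Lemma wedge_contain (l mu : bipartition) (f : int -> int) : injective f ->
  (forall v, in_wedge mu v -> in_wedge l (f v) /\ (v <= f v)%R) ->
  forall k, (1 <= k)%N -> (part (bul mu) k <= part (bul l) k)%N.
Proof.
move=> finj Hf k Hk; rewrite leqNgt; apply/negP => Hlt.
have HkA : (Aw (bul l) k < Aw (bul mu) k)%R by rewrite /Aw; lia.
set S1 := [seq f (Aw (bul mu) i) | i <- iota 1 k].
set S2 := [seq Aw (bul l) i | i <- iota 1 k.-1].
have U : uniq S1.
  rewrite map_inj_in_uniq ?iota_uniq // => i j; rewrite !mem_iota => Hi Hj /finj.
  apply: Aw_inj; lia.
have Sub : {subset S1 <= S2}.
  move=> x /mapP [i]; rewrite mem_iota => Hi ->.
  have [[i' [Hi' E]] Hle] := Hf (Aw (bul mu) i) (ex_intro _ i (conj (proj1 (andP Hi)) erefl)).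
  apply/mapP; exists i'; last by [].
  rewrite mem_iota; apply/andP; split => //.
  have Hle2 : (Aw (bul mu) k <= Aw (bul mu) i)%R by apply: Aw_le; lia.
  rewrite ltnNge; apply/negP => Hki.
  have : (Aw (bul l) i' <= Aw (bul l) k)%R by apply: Aw_le; lia.
  rewrite /Aw in E Hle Hle2 HkA *; lia.
have := uniq_leq_size U Sub; rewrite !size_map !size_iota; lia.
Qed.

Lemma vee_contain m n (l mu : bipartition) (f : int -> int) : injective f ->
  (forall v, Vl m n mu v -> Vl m n l (f v) /\ (f v <= v)%R) ->
  forall k, (1 <= k)%N -> (part (cir mu) k <= part (cir l) k)%N.
Proof.
move=> finj Hf k Hk; rewrite leqNgt; apply/negP => Hlt.
have HkA : (Bv m n (cir mu) k < Bv m n (cir l) k)%R by rewrite /Bv; lia.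
set S1 := [seq f (Bv m n (cir mu) i) | i <- iota 1 k].
set S2 := [seq Bv m n (cir l) i | i <- iota 1 k.-1].
have U : uniq S1.
  rewrite map_inj_in_uniq ?iota_uniq // => i j; rewrite !mem_iota => Hi Hj /finj.
  apply: Bv_inj; lia.
have Sub : {subset S1 <= S2}.
  move=> x /mapP [i]; rewrite mem_iota => Hi ->.
  have [[i' [Hi' E]] Hle] := Hf (Bv m n (cir mu) i) (ex_intro _ i (conj (proj1 (andP Hi)) erefl)).
  apply/mapP; exists i'; last by [].
  rewrite mem_iota; apply/andP; split => //.
  have Hle2 : (Bv m n (cir mu) i <= Bv m n (cir mu) k)%R by apply: Bv_le; lia.
  rewrite ltnNge; apply/negP => Hki.
  have : (Bv m n (cir l) k <= Bv m n (cir l) i')%R by apply: Bv_le; lia.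
  rewrite /Bv in E Hle Hle2 HkA *; lia.
have := uniq_leq_size U Sub; rewrite !size_map !size_iota; lia.
Qed.

Lemma sumn_nth (s : seq nat) N : (size s <= N)%N -> sumn s = \sum_(i < N) nth 0%N s i.
Proof.
elim: s N => [|x s IH] [|N] H /=.
- by rewrite big_ord0.
- by rewrite big1 // => i _; rewrite nth_nil.
- by [].
- by rewrite big_ord_recl /= (IH N).
Qed.

Lemma sum_ge1 (F : nat -> nat) N x : (x < N)%N -> (F x <= \sum_(i < N) F i)%N.
Proof.
elim: N => [//|N IH] H; rewrite big_ord_recr /=.
case: (ltngtP x N) => Hx.
- exact: leq_trans (IH Hx) (leq_addr _ _).
- lia.
- subst; exact: leq_addl.
Qed.

Lemma sum_ge2 (F : nat -> nat) N x y : (x < N)%N -> (y < N)%N -> x <> y ->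
  (F x + F y <= \sum_(i < N) F i)%N.
Proof.
elim: N => [//|N IH] Hx Hy Hxy; rewrite big_ord_recr /=.
case: (ltngtP x N) => Hx'; case: (ltngtP y N) => Hy'; try lia.
- exact: leq_trans (IH Hx' Hy' Hxy) (leq_addr _ _).
- subst; rewrite leq_add2r; exact: (sum_ge1 F Hx').
- subst; rewrite addnC leq_add2r; exact: (sum_ge1 F Hy').
Qed.

Lemma psize_diff2 (a b : Defs.partition) k k' :
  (forall i, (1 <= i)%N -> (part b i <= part a i)%N) -> (1 <= k)%N -> (1 <= k')%N -> k <> k' ->
  (psize b + (part a k - part b k) + (part a k' - part b k') <= psize a)%N.
Proof.
move=> Hc Hk Hk' Hkk.
set N := (size (pseq a) + size (pseq b) + k + k')%N.
rewrite /psize (sumn_nth (N:=N)) ?(sumn_nth (s:=pseq a) (N:=N)); try lia.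
have E : \sum_(i < N) nth 0%N (pseq a) i =
  (\sum_(i < N) nth 0%N (pseq b) i + \sum_(i < N) (nth 0%N (pseq a) i - nth 0%N (pseq b) i))%N.
  rewrite -big_split /=; apply: eq_bigr => i _.
  have := Hc i.+1 isT; rewrite /part /=; lia.
rewrite E.
have := @sum_ge2 (fun i => nth 0%N (pseq a) i - nth 0%N (pseq b) i)%N N k.-1 k'.-1.
rewrite /part; move=> H; have := H ltac:(lia) ltac:(lia) ltac:(lia); lia.
Qed.

Lemma psize_diff1 (a b : Defs.partition) k :
  (forall i, (1 <= i)%N -> (part b i <= part a i)%N) -> (1 <= k)%N ->
  (psize b + (part a k - part b k) <= psize a)%N.
Proof.
move=> Hc Hk.
set N := (size (pseq a) + size (pseq b) + k)%N.
rewrite /psize (sumn_nth (N:=N)) ?(sumn_nth (s:=pseq a) (N:=N)); try lia.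
have E : \sum_(i < N) nth 0%N (pseq a) i =
  (\sum_(i < N) nth 0%N (pseq b) i + \sum_(i < N) (nth 0%N (pseq a) i - nth 0%N (pseq b) i))%N.
  rewrite -big_split /=; apply: eq_bigr => i _.
  have := Hc i.+1 isT; rewrite /part /=; lia.
rewrite E.
have := @sum_ge1 (fun i => nth 0%N (pseq a) i - nth 0%N (pseq b) i)%N N k.-1.
rewrite /part; move=> H; have := H ltac:(lia); lia.
Qed.

Lemma nth_zero_all (u : seq nat) i : (forall y, y \in u -> y = 0%N) -> nth 0%N u i = 0%N.
Proof.
move=> H; case: (ltnP i (size u)) => Hi; last by rewrite nth_default.
by apply: H; apply: mem_nth.
Qed.

Lemma filter_pos_nth (t : seq nat) k : sorted geq t ->
  nth 0%N [seq x <- t | (0 < x)%N] k = nth 0%N t k.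
Proof.
elim: t k => [|x t IH] k //= Hs.
have Ht : sorted geq t := path_sorted Hs.
have Hall := order_path_min geq_tr Hs.
case: (posnP x) => Hx.
- subst x.
  have Z : forall y, y \in t -> y = 0%N.
    by move=> y Hy; move/allP: Hall => /(_ y Hy) /=; lia.
  rewrite nth_zero_all; last first.
    move=> y; rewrite mem_filter => /andP [Hy1 Hy2]; have := Z y Hy2; lia.
  case: k => //= k; by rewrite nth_zero_all.
- by case: k => //= k; rewrite IH.
Qed.

Lemma remove_box (a : Defs.partition) i : (1 <= i)%N -> (part a i.+1 < part a i)%N ->
  exists b : Defs.partition, forall j, (1 <= j)%N -> part b j = (part a j - (j == i))%N.
Proof.
move=> Hi Hlt.
have /andP [Hs _] := pseqP a.
have Hsz : (i.-1 < size (pseq a))%N.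
  rewrite ltnNge; apply/negP => H.
  have Z : part a i = 0%N by apply: part_zero; move: H; case: (i) Hi => [//|i'] _ /=.
  move: Hlt; rewrite Z; lia.
move: Hlt Hsz Hs; rewrite /part; set s := pseq a => Hlt Hsz Hs.
set t := set_nth 0%N s i.-1 (nth 0%N s i.-1).-1.
have Hst : size t = size s by rewrite /t size_set_nth; apply/maxn_idPr.
have St : sorted geq t.
  apply/(sortedP 0%N) => k; rewrite Hst => Hk.
  move/(sortedP 0%N): Hs => Hs.
  rewrite /t !nth_set_nth /=.
  have := Hs k Hk.
  case: (eqVneq k i.-1) => E1; case: (eqVneq k.+1 i.-1) => E2 /=; try lia; clearbody s t.
  - subst k; have -> : i.-1.+1 = i by lia. move: Hlt => /= Hlt; lia.
  - rewrite -E2; lia.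
have Hp : is_partition [seq x <- t | (0 < x)%N].
  by rewrite /is_partition sorted_filter //=; [apply: filter_all | exact: geq_tr].
exists (Partition Hp) => j Hj.
rewrite /part /= filter_pos_nth // /t nth_set_nth /=.
case: (eqVneq j i) => E.
- subst j; rewrite eqxx /=; lia.
- have -> : (j.-1 == i.-1) = false by apply/eqP; lia.
  rewrite subn0 //.
Qed.

Lemma rem_bul m n (l : bipartition) t : ~ cross m n l -> (1 <= t)%N ->
  (part (bul l) t.+1 < part (bul l) t)%N ->
  (forall k, (k <= m)%N -> k.+1 = t -> (n < (part (bul l) t).-1 + part (cir l) (m - k).+1)%N) ->
  exists nu, strictly_contained nu l /\ ~ cross m n nu.
Proof.
move=> Hnc Ht Hlt Hk.
have [b Hb] := remove_box Ht Hlt.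
exists (Bipartition b (cir l)); split.
- split.
  + move=> i Hi /=; rewrite Hb //; split; lia.
  + move=> E; have Eb : b = bul l by rewrite -E.
    have := Hb t Ht; rewrite Eb eqxx; lia.
- move=> [k [Hkm]] /=; rewrite Hb //; case: (eqVneq k.+1 t) => E.
  + have := Hk k Hkm E; rewrite E; lia.
  + move=> Hs; apply: Hnc; exists k; split => //; lia.
Qed.

Lemma rem_cir m n (l : bipartition) t : ~ cross m n l -> (1 <= t)%N ->
  (part (cir l) t.+1 < part (cir l) t)%N ->
  (forall k, (k <= m)%N -> (m - k).+1 = t -> (n < part (bul l) k.+1 + (part (cir l) t).-1)%N) ->
  exists nu, strictly_contained nu l /\ ~ cross m n nu.
Proof.
move=> Hnc Ht Hlt Hk.
have [b Hb] := remove_box Ht Hlt.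
exists (Bipartition (bul l) b); split.
- split.
  + move=> i Hi /=; rewrite Hb //; split; lia.
  + move=> E; have Eb : b = cir l by rewrite -E.
    have := Hb t Ht; rewrite Eb eqxx; lia.
- move=> [k [Hkm]] /=; rewrite Hb //; case: (eqVneq (m - k).+1 t) => E.
  + have := Hk k Hkm E; rewrite E; lia.
  + move=> Hs; apply: Hnc; exists k; split => //; lia.
Qed.

Lemma almost_no_rem m n l : almost_cross m n l ->
  ~ (exists nu, strictly_contained nu l /\ ~ cross m n nu).
Proof. by move=> [_ H] [nu [Hs Hc]]; apply: Hc; apply: H. Qed.

Lemma ex_min_nat (P : nat -> Prop) : (exists n, P n) -> exists n, P n /\ forall k, (k < n)%N -> ~ P k.
Proof.
move=> [n Hn]; apply: NNPP => Hno.
have H : forall N k, (k <= N)%N -> ~ P k.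
  elim=> [|N IH] k Hk Pk.
  - apply: Hno; exists k; split => // j Hj; lia.
  - apply: Hno; exists k; split => // j Hj; apply: IH; lia.
exact: (H n n (leqnn n) Hn).
Qed.

Lemma key2 m n (l : bipartition) (p : int) : ~ cross m n l ->
  in_wedge l p -> ~ Vl m n l p -> Vl m n l (p + 1)%R -> ~ in_wedge l (p + 1)%R ->
  exists nu, strictly_contained nu l /\ ~ cross m n nu.
Proof.
move=> Hnc [s [Hs Ep]] HnV [r [Hr Ep1]] HnW.
have Hrs : (m + 3 <= r + s)%N.
  rewrite leqNgt; apply/negP => H.
  apply: Hnc; exists (s - 1)%N; split; first lia.
  have -> : (s - 1).+1 = s by lia.
  have := part_mono (cir l) Hr (j := (m - (s - 1)).+1) ltac:(lia).
  lia.
have [HPs|HPs] := posnP (part (bul l) s).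
  have [HQr|HQr] := posnP (part (cir l) r).
    exfalso; lia.
  have Hex : exists t, (r <= t)%N /\ (part (cir l) t.+1 < part (cir l) r)%N.
    exists (r + size (pseq (cir l)))%N; split; first lia; rewrite part_zero; lia.
  have [t [[Hrt Htlt] Hmin]] := ex_min_nat Hex.
  have HQt : part (cir l) t = part (cir l) r.
    case: (eqVneq t r) => [->//|Ne].
    have Hn := Hmin t.-1 ltac:(lia).
    have := part_mono (cir l) Hr Hrt.
    have -> : t = t.-1.+1 by lia.
    move=> H1; apply/eqP; rewrite eqn_leq H1 /=; rewrite leqNgt; apply/negP => H2; apply: Hn; split; lia.
  apply: (rem_cir Hnc (t := t)); first lia.
    by rewrite HQt.
  move=> k Hkm Ekt.
  have Hs2 : (2 <= s)%N by lia.
  have HP : part (bul l) (s - 1) != part (bul l) s.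
    apply/eqP => E; apply: HnW; exists (s - 1)%N; split; first lia.
    rewrite E; lia.
  have := part_mono (bul l) (i := s - 1) (j := s) ltac:(lia) ltac:(lia).
  have := part_mono (bul l) (i := k.+1) (j := s - 1) ltac:(lia) ltac:(lia).
  rewrite HQt; move: HP => /eqP HP; lia.
have Hex : exists t, (s <= t)%N /\ (part (bul l) t.+1 < part (bul l) s)%N.
  exists (s + size (pseq (bul l)))%N; split; first lia; rewrite part_zero; lia.
have [t [[Hst Htlt] Hmin]] := ex_min_nat Hex.
have HPt : part (bul l) t = part (bul l) s.
  case: (eqVneq t s) => [->//|Ne].
  have Hn := Hmin t.-1 ltac:(lia).
  have := part_mono (bul l) Hs Hst.
  have -> : t = t.-1.+1 by lia.
  move=> H1; apply/eqP; rewrite eqn_leq H1 /=; rewrite leqNgt; apply/negP => H2; apply: Hn; split; lia.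
apply: (rem_bul Hnc (t := t)); first lia.
  by rewrite HPt.
move=> k Hkm Ekt.
have Hr2 : (2 <= r)%N by lia.
have HQ : part (cir l) (r - 1) != part (cir l) r.
  apply/eqP => E; apply: HnV; exists (r - 1)%N; split; first lia.
  rewrite E; lia.
have := part_mono (cir l) (i := r - 1) (j := r) ltac:(lia) ltac:(lia).
have := part_mono (cir l) (i := (m - k).+1) (j := r - 1) ltac:(lia) ltac:(lia).
rewrite HPt; move: HQ => /eqP HQ; lia.
Qed.

Lemma key1 m n (l : bipartition) (u w : int) : ~ cross m n l ->
  Vl m n l u -> ~ in_wedge l u -> in_wedge l w -> ~ Vl m n l w -> (u < w)%R ->
  (forall v, (u < v)%R -> (v < w)%R -> in_wedge l v -> Vl m n l v) ->
  exists nu, strictly_contained nu l /\ ~ cross m n nu.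
Proof.
move=> Hnc [r [Hr Eu]] HuW [s [Hs Ew]] HwV Huw Hbet.
have Hex1 : exists j, (r < j)%N /\ (w <= Bv m n (cir l) j)%R.
  exists (r + m + part (cir l) 1 + absz w).+1; split; first lia.
  have := part_mono (cir l) (i := 1) (j := (r + m + part (cir l) 1 + absz w).+1) isT ltac:(lia).
  rewrite /Bv; lia.
have [j1 [[Hrj Hwj] Hmin1]] := ex_min_nat Hex1.
have Hwj' : (w < Bv m n (cir l) j1)%R.
  rewrite lt_def Hwj andbT; apply/eqP => E; apply: HwV; exists j1; split; first lia.
  exact: esym E.
have Hti : (Bv m n (cir l) j1.-1 < w)%R.
  case: (eqVneq j1.-1 r) => E.
    by rewrite E /Bv -Eu.
  have Hn := Hmin1 j1.-1 ltac:(lia).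
  rewrite ltNge; apply/negP => H; apply: Hn; split => //; lia.
have Hex0 : exists j, (s < j)%N /\ (Aw (bul l) j < u)%R.
  exists (s + part (bul l) 1 + absz u).+2; split; first lia.
  have := part_mono (bul l) (i := 1) (j := (s + part (bul l) 1 + absz u).+2) isT ltac:(lia).
  rewrite /Aw; lia.
have [j0 [[Hsj Hju] Hmin0]] := ex_min_nat Hex0.
have Hj0u : (u < Aw (bul l) j0.-1)%R.
  case: (eqVneq j0.-1 s) => E.
    by rewrite E /Aw -Ew.
  have Hn := Hmin0 j0.-1 ltac:(lia).
  have Hge : (u <= Aw (bul l) j0.-1)%R.
    rewrite leNgt; apply/negP => H; apply: Hn; split => //; lia.
  rewrite lt_def Hge andbT; apply/eqP => E'; apply: HuW; exists j0.-1; split; first lia.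
  by rewrite -E'.
(* pigeonhole *)
set S1 := [seq Aw (bul l) x | x <- iota s.+1 (j0.-1 - s)].
set S2 := [seq Bv m n (cir l) y | y <- iota r.+1 (j1.-1 - r)].
have U : uniq S1.
  rewrite map_inj_in_uniq ?iota_uniq // => x y; rewrite !mem_iota => Hx Hy.
  apply: Aw_inj; lia.
have Sub : {subset S1 <= S2}.
  move=> z /mapP [x]; rewrite mem_iota => Hx ->.
  have Hx1 : (Aw (bul l) x < w)%R by rewrite Ew; apply: Aw_lt; lia.
  have Hx2 : (Aw (bul l) j0.-1 <= Aw (bul l) x)%R by apply: Aw_le; lia.
  have HwA : in_wedge l (Aw (bul l) x) by exists x; split; first lia.
  have [y [Hy Ey]] := Hbet (Aw (bul l) x) ltac:(lia) Hx1 HwA.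
  apply/mapP; exists y => //; rewrite mem_iota; apply/andP; split.
  - rewrite ltnNge; apply/negP => H.
    have := Bv_le m n (cir l) Hy H; rewrite /Bv; lia.
  - rewrite ltnNge; apply/negP => H.
    have := Bv_le m n (cir l) (i := j1) (j := y) ltac:(lia) ltac:(lia).
    move: Hwj; rewrite /Bv; lia.
have Hc := uniq_leq_size U Sub; rewrite !size_map !size_iota in Hc.
have Hsum : (m + 2 <= j1.-1 + s)%N.
  case: (leqP j0.-1 m) => Hj0m; last lia.
  suff : (m + 3 <= r + j0)%N by lia.
  rewrite leqNgt; apply/negP => H.
  apply: Hnc; exists j0.-1; split => //.
  have -> : j0.-1.+1 = j0 by lia.
  have := part_mono (cir l) Hr (j := (m - j0.-1).+1) ltac:(lia).
  move: Hju; rewrite /Aw Eu; lia.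
apply: (rem_cir Hnc (t := j1.-1)); first lia.
  have -> : j1.-1.+1 = j1 by lia.
  move: Hwj' Hti; rewrite /Bv; lia.
move=> k Hkm Ekt.
have := part_mono (bul l) (i := k.+1) (j := s) ltac:(lia) ltac:(lia).
move: Hti; rewrite /Bv Ew; lia.
Qed.

Lemma caps_props x k i j : caps_upto x k i j -> (i < j)%R /\ x i = Vee /\ x j = Wedge.
Proof.
elim: k i j => [//|k IH] i j /= [H|[H1 [H2 [H3 _]]]]; first exact: IH.
by [].
Qed.

Lemma cap_props x i j : cap x i j -> (i < j)%R /\ x i = Vee /\ x j = Wedge.
Proof. by move=> [k Hk]; apply: caps_props Hk. Qed.

Lemma caps_mono x k k' i j : (k <= k')%N -> caps_upto x k i j -> caps_upto x k' i j.
Proof.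
elim: k' => [|k' IH] Hk H.
- have E : k = 0%N by lia.
  by rewrite E in H.
- case: (eqVneq k k'.+1) => [E|Ne]; first by rewrite -E.
  left; apply: IH => //; lia.
Qed.

Lemma caps_first x k i j : caps_upto x k i j -> exists k', (k' < k)%N /\ new_cap x (caps_upto x k') i j.
Proof.
elim: k => [//|k IH] /= [H|H].
- have [k' [Hk' H']] := IH H; exists k'; split => //; lia.
- by exists k; split.
Qed.

Lemma new_cap_same_l x C a b c : new_cap x C a b -> new_cap x C a c -> b = c.
Proof.
move=> [Hab [Ha [Hb [Hna [Hnb Hbet]]]]] [Hac [Ha' [Hc [Hna' [Hnc Hbet']]]]].
case: (ltgtP b c) => // H.
- have [E|[E|E]] := Hbet' b Hab H; rewrite ?Hb in E => //; by [].
- have [E|[E|E]] := Hbet c Hac H; rewrite ?Hc in E => //; by [].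
Qed.

Lemma new_cap_same_r x C a b c : new_cap x C a c -> new_cap x C b c -> a = b.
Proof.
move=> [Hac [Ha [Hc [Hna [Hnc Hbet]]]]] [Hbc [Hb [Hc' [Hnb [Hnc' Hbet']]]]].
case: (ltgtP a b) => // H.
- have [E|[E|E]] := Hbet b H Hbc; rewrite ?Hb in E => //; by [].
- have [E|[E|E]] := Hbet' a H Hac; rewrite ?Ha in E => //; by [].
Qed.

Lemma new_cap_later x k1 k2 a b c d : (k1 < k2)%N ->
  new_cap x (caps_upto x k1) a b -> new_cap x (caps_upto x k2) c d ->
  c <> a /\ c <> b /\ d <> a /\ d <> b.
Proof.
move=> Hk H1 [_ [_ [_ [Hnc [Hnd _]]]]].
have Hab : caps_upto x k2 a b by apply: (caps_mono (k := k1.+1)) => //; right.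
have Oa : on_cap (caps_upto x k2) a by exists a, b; split => //; left.
have Ob : on_cap (caps_upto x k2) b by exists a, b; split => //; right.
by split; [move=> E|split; [move=> E|split; move=> E]]; subst;
  [apply: Hnc|apply: Hnc|apply: Hnd|apply: Hnd].
Qed.

Lemma cap_uniq_l x a b c : cap x a b -> cap x a c -> b = c.
Proof.
move=> [k1 H1] [k2 H2].
have [k1' [_ N1]] := caps_first H1; have [k2' [_ N2]] := caps_first H2.
case: (ltngtP k1' k2') => Hk.
- by have [] := new_cap_later Hk N1 N2.
- by have [] := new_cap_later Hk N2 N1.
- subst; exact: new_cap_same_l N1 N2.
Qed.

Lemma cap_uniq_r x a b c : cap x a c -> cap x b c -> a = b.
Proof.
move=> [k1 H1] [k2 H2].
have [k1' [_ N1]] := caps_first H1; have [k2' [_ N2]] := caps_first H2.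
case: (ltngtP k1' k2') => Hk.
- by have [_ [_ [_ E]]] := new_cap_later Hk N1 N2.
- by have [_ [_ [_ E]]] := new_cap_later Hk N2 N1.
- subst; exact: new_cap_same_r N1 N2.
Qed.

Definition tau (p : int * int) (w : int) : int :=
  if w == p.1 then p.2 else if w == p.2 then p.1 else w.

Lemma swap_cons p s v : swap_pairs (p :: s) v = tau p (swap_pairs s v).
Proof. by []. Qed.

Lemma tau_inv p w : tau p (tau p w) = w.
Proof.
rewrite /tau; case: (eqVneq w p.1) => E1.
- case: (eqVneq p.2 p.1) => E2 //; first by rewrite E2 E1.
  by rewrite eqxx E1.
- case: (eqVneq w p.2) => E2.
  + by rewrite eqxx E2.
  + by rewrite (negbTE E1) (negbTE E2).
Qed.

Lemma swap_inj s : injective (swap_pairs s).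
Proof.
elim: s => [|p s IH] a b // E; apply: IH.
rewrite -(tau_inv p (swap_pairs s a)) -(tau_inv p (swap_pairs s b)).
by congr tau; move: E; rewrite !swap_cons.
Qed.

Lemma swap_struct x s : (forall p, p \in s -> cap x p.1 p.2) ->
  forall v, swap_pairs s v = v \/ cap x v (swap_pairs s v) \/ cap x (swap_pairs s v) v.
Proof.
elim: s => [|p s IH] Hs v; first by left.
have Hp : cap x p.1 p.2 by apply: Hs; rewrite inE eqxx.
have IH' := IH (fun q Hq => Hs q ltac:(by rewrite inE Hq orbT)) v.
rewrite swap_cons /tau.
set w := swap_pairs s v in IH' *.
have [Hp12 [Hp1 Hp2]] := cap_props Hp.
case: (eqVneq w p.1) => E1.
- rewrite -E1 in Hp Hp1.
  case: IH' => [E|[H|H]].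
  + by right; left; rewrite -E.
  + by have [_ [_ H']] := cap_props H; rewrite H' in Hp1.
  + by left; apply: cap_uniq_l Hp H.
- case: (eqVneq w p.2) => E2.
  + rewrite -E2 in Hp Hp2.
    case: IH' => [E|[H|H]].
    * by right; right; rewrite -E.
    * by left; apply: (cap_uniq_r Hp H).
    * by have [_ [H' _]] := cap_props H; rewrite H' in Hp2.
  + exact: IH'.
Qed.

Lemma swap_pq x s v : (forall p, p \in s -> cap x p.1 p.2) -> swap_pairs s v <> v ->
  exists p q, (p < q)%R /\ x p = Vee /\ x q = Wedge /\
    x (swap_pairs s p) = Wedge /\ x (swap_pairs s q) = Vee.
Proof.
move=> Hs Hne.
have St := swap_struct Hs.
set w := swap_pairs s v in Hne.
have Hw : swap_pairs s v = w by [].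
case: (St v) => [//|[H|H]]; rewrite -/w in H.
- have [Hvw [Hv Hw']] := cap_props H.
  case: (St w) => [E|[H2|H2]].
  + exfalso; apply: Hne; apply: (swap_inj (s := s)); by rewrite E.
  + by have [_ [H3 _]] := cap_props H2; rewrite H3 in Hw'.
  + have E := cap_uniq_r H2 H.
    exists v, w; split => //; split => //; split => //; split; by rewrite ?E.
- have [Hvw [Hv Hw']] := cap_props H.
  case: (St w) => [E|[H2|H2]].
  + exfalso; apply: Hne; apply: (swap_inj (s := s)); by rewrite E.
  + have E := cap_uniq_l H2 H.
    exists w, v; split => //; split => //; split => //; split; by rewrite ?E.
  + by have [_ [_ H3]] := cap_props H2; rewrite H3 in Hv.
Qed.

Lemma weights_eq (K : fieldType) (charK0 : [pchar K]%R =i pred0) m n (l mu : bipartition) :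
  (forall j, weight (((m%:Z - n%:Z)%R)%:~R%R : K) l j = weight (((m%:Z - n%:Z)%R)%:~R%R : K) mu j) ->
  l = mu.
Proof.
set d := (((m%:Z - n%:Z)%R)%:~R%R : K).
move=> E.
have W1 : forall v, in_wedge l v <-> in_wedge mu v.
  by move=> v; rewrite !(weight_wedge d) E.
have V1 : forall v, Vl m n l v <-> Vl m n mu v.
  by move=> v; rewrite -!(vee_iff charK0) !(weight_vee d) E.
have Hb : bul l = bul mu.
  apply: part_inj => k Hk; apply/eqP; rewrite eqn_leq; apply/andP; split.
  - apply: (wedge_contain (f := id)) => // v Hv; split; [by apply/W1|exact: lexx].
  - apply: (wedge_contain (f := id)) => // v Hv; split; [by apply/W1|exact: lexx].
have Hc : cir l = cir mu.
  apply: part_inj => k Hk; apply/eqP; rewrite eqn_leq; apply/andP; split.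
  - apply: (vee_contain (m := m) (n := n) (f := id)) => // v Hv; split; [by apply/V1|exact: lexx].
  - apply: (vee_contain (m := m) (n := n) (f := id)) => // v Hv; split; [by apply/V1|exact: lexx].
by case: l mu Hb Hc {E W1 V1} => [b c] [b' c'] /= -> ->.
Qed.

Lemma pure_pair m n (l : bipartition) (u w : int) : ~ cross m n l ->
  Vl m n l u -> ~ in_wedge l u -> in_wedge l w -> ~ Vl m n l w -> (u < w)%R ->
  exists nu, strictly_contained nu l /\ ~ cross m n nu.
Proof.
move=> Hnc HuV HuW.
suff H : forall N w, (absz (w - u) <= N)%N -> in_wedge l w -> ~ Vl m n l w -> (u < w)%R ->
  exists nu, strictly_contained nu l /\ ~ cross m n nu.
  by move=> HwW HwV Huw; apply: (H _ w (leqnn _)).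
elim=> [|N IH] w0 Hd HwW HwV Huw; first lia.
case: (classic (exists v, (u < v)%R /\ (v < w0)%R /\ in_wedge l v /\ ~ Vl m n l v)).
- move=> [v [H1 [H2 [H3 H4]]]]; apply: (IH v) => //; lia.
- move=> Hno; apply: (key1 Hnc HuV HuW HwW HwV Huw) => v H1 H2 H3.
  apply: NNPP => H4; apply: Hno; exists v; tauto.
Qed.

Lemma part_i (K : fieldType) (charK0 : [pchar K]%R =i pred0) m n (l mu : bipartition) :
  almost_cross m n l -> mu <> l ->
  ~ linked (weight (((m%:Z - n%:Z)%R)%:~R%R : K) l) (weight (((m%:Z - n%:Z)%R)%:~R%R : K) mu).
Proof.
set d := (((m%:Z - n%:Z)%R)%:~R%R : K).
move=> Hac Hne [s [Hs Hy]].
have nocap : forall a b, ~ cap (weight d l) a b.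
  move=> a b Hc; have [Hab [Ha Hb]] := cap_props Hc.
  move/(weight_Vee d): Ha => [Ha1 Ha2]; move/(weight_Wedge d): Hb => [Hb1 Hb2].
  rewrite (vee_iff charK0) in Ha1; rewrite (vee_iff charK0) in Hb2.
  apply: (almost_no_rem Hac); apply: (pure_pair (proj1 Hac) Ha1 Ha2 Hb1 Hb2 Hab).
case: s Hs Hy => [|p s] Hs Hy.
- apply: Hne; apply: (weights_eq charK0) => j; exact: Hy j.
- by apply: (nocap p.1 p.2); apply: Hs; rewrite inE eqxx.
Qed.

Lemma part_ii (K : fieldType) (charK0 : [pchar K]%R =i pred0) m n (l mu : bipartition) :
  almost_cross m n mu ->
  linked (weight (((m%:Z - n%:Z)%R)%:~R%R : K) l) (weight (((m%:Z - n%:Z)%R)%:~R%R : K) mu) ->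
  l = mu \/ (bsize mu + 2 < bsize l)%N.
Proof.
set d := (((m%:Z - n%:Z)%R)%:~R%R : K).
move=> Hac [s [Hs Hy]].
set sg := swap_pairs s in Hy.
have St := swap_struct Hs.
have Inj : injective sg := @swap_inj s.
have Hcw : forall k, (1 <= k)%N -> (part (bul mu) k <= part (bul l) k)%N.
  apply: (wedge_contain (f := sg)) => // v Hv.
  have Hx : weight d l (sg v) = Wedge \/ weight d l (sg v) = Cross.
    by rewrite -Hy; apply/(weight_wedge d).
  split; first by apply/(weight_wedge d).
  case: (St v) => [E|[H|H]].
  - by rewrite /sg E.
  - by have [H1 _] := cap_props H; apply: ltW.
  - by have [_ [H1 _]] := cap_props H; move: Hx; rewrite /sg H1; case.
have Hcv : forall k, (1 <= k)%N -> (part (cir mu) k <= part (cir l) k)%N.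
  apply: (vee_contain (m := m) (n := n) (f := sg)) => // v Hv.
  rewrite -(vee_iff charK0) in Hv.
  have Hx : weight d l (sg v) = Vee \/ weight d l (sg v) = Cross.
    by rewrite -Hy; apply/(weight_vee d).
  split; first by rewrite -(vee_iff charK0); apply/(weight_vee d).
  case: (St v) => [E|[H|H]].
  - by rewrite /sg E.
  - by have [_ [_ H1]] := cap_props H; move: Hx; rewrite /sg H1; case.
  - by have [H1 _] := cap_props H; apply: ltW.
case: (classic (forall v, sg v = v)) => Hid.
  left; apply: (weights_eq charK0) => j; have := Hy j; rewrite Hid => E; exact: esym E.
have [v Hv] := not_all_ex_not _ _ Hid.
have [p [q [Hpq [Hxp [Hxq [Hyp Hyq]]]]]] := swap_pq Hs Hv.
rewrite -Hy in Hyp; rewrite -Hy in Hyq.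
move/(weight_Vee d): Hxp => [Hxp1 Hxp2]; move/(weight_Wedge d): Hxq => [Hxq1 Hxq2].
move/(weight_Wedge d): Hyp => [Hyp1 Hyp2]; move/(weight_Vee d): Hyq => [Hyq1 Hyq2].
rewrite (vee_iff charK0) in Hxp1 Hxq2 Hyp2 Hyq1.
right.
have [k [Hk Ep]] := Hyp1.
have Hk1 : (part (bul mu) k < part (bul l) k)%N.
  rewrite ltn_neqAle Hcw // andbT; apply/eqP => E; apply: Hxp2; exists k; split => //.
  by rewrite -E.
have [k' [Hk' Eq]] := Hxq1.
have Hk1' : (part (bul mu) k' < part (bul l) k')%N.
  rewrite ltn_neqAle Hcw // andbT; apply/eqP => E; apply: Hyq2; exists k'; split => //.
  by rewrite E.
have [j [Hj Eqv]] := Hyq1.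
have Hj1 : (part (cir mu) j < part (cir l) j)%N.
  rewrite ltn_neqAle Hcv // andbT; apply/eqP => E; apply: Hxq2; exists j; split => //.
  by rewrite -E.
have Dc := psize_diff1 Hcv Hj.
rewrite /bsize.
case: (eqVneq k k') => Ekk.
- subst k'.
  case: (leqP 2 (part (bul l) k - part (bul mu) k)) => H2.
  + have := psize_diff1 Hcw Hk; lia.
  + exfalso.
    have Eq1 : q = (p + 1)%R by rewrite Eq Ep; lia.
    rewrite Eq1 in Hyq1 Hxq1 Hyq2.
    rewrite (vee_iff charK0) in Hyp2; rewrite (vee_iff charK0) in Hyq1.
    apply: (almost_no_rem Hac); apply: (key2 (proj1 Hac) Hyp1 Hyp2 Hyq1 Hyq2).
- have Hne : k <> k' by apply/eqP.
  have := psize_diff2 Hcw Hk Hk' Hne; lia.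
Qed.

Theorem corollary2p8 (K : fieldType) (charK0 : [pchar K]%R =i pred0)
    (m n : nat) (lam mu : bipartition) :
  let d : K := ((m%:Z - n%:Z)%R)%:~R%R in
  (almost_cross m n lam -> mu <> lam -> D d lam mu = 0) /\
  (almost_cross m n mu -> D d lam mu = 0 \/ lam = mu \/ bsize lam > bsize mu + 2).
Proof.
move=> d; split.
- move=> Hac Hne; rewrite /D.
  destruct (excluded_middle_informative (linked (weight d lam) (weight d mu))) as [Hl|Hl] => //.
  exfalso; exact: (part_i charK0 Hac Hne Hl).
- move=> Hac; rewrite /D.
  destruct (excluded_middle_informative (linked (weight d lam) (weight d mu))) as [Hl|Hl].
  + right; exact: (part_ii charK0 Hac Hl).
  + by left.
Qed.
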